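(* Let $G$ be a finite group acting cellularly on $K$, and hence on $\operatorname{Sec}(\pi^{\mathrm{sk}})$. Then the groupoid of $G$-equivariant Stokes cocycles on $K$ is canonically equivalent to the homotopy fixed point groupoid $\operatorname{Sec}(\pi^{\mathrm{sk}})^{hG}$.
   Context: Setting: $N^\circ$ is a regular punctured collar (walls removed) of the boundary over a reduced SNC divisor $D$ in a level-$n$ Kummer Kato–Nakayama space, with Stokes input (finite index set $\Phi$, graded local system $\mathrm{Gr}=\bigoplus_{q\in\Phi}\mathrm{Gr}_q$, locally constant preorders) and Stokes sheaf $\mathrm{St}_\Phi$ (automorphisms of $\mathrm{Gr}$ preserving the standard filtrations $\bigoplus_{q'\preceq q}\mathrm{Gr}_{q'}$ and inducing the identity on graded pieces). $\Sigma_{D,\Phi,n}$ is the common refinement of the SNC-depth and Stokes-wall stratifications of $N^\circ$; on each stratum $S$, $\mathrm{St}_\Phi$ is locally constant, and $\mathrm{St}_\Phi(S)$ denotes its group of sections over a contractible open of $S$. $K$ is a locally finite CW decomposition of $N^\circ$ adapted to $\Sigma_{D,\Phi,n}$ (every open cell lies in a unique stratum; $S(c)$ is the stratum of a cell $c$). $\Pi_1^{\mathrm{sk}}(K)$ is the groupoid on the vertices generated by oriented $1$-cells (with inverses) subject to the relations from $2$-cells. $\mathcal G_C^{\mathrm{sk}}$ has the same objects and is generated by $(e,u)$, $e$ an oriented edge, $u\in\mathrm{St}_\Phi(S(e))$, with labels multiplying along compositions and $2$-cell relations; $\pi^{\mathrm{sk}}:\mathcal G_C^{\mathrm{sk}}\to\Pi_1^{\mathrm{sk}}(K)$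 forgets labels. A strict section of $\pi^{\mathrm{sk}}$ is equivalently a choice of labels $u_e\in\mathrm{St}_\Phi(S(e))$ on oriented $1$-cells satisfying the $2$-cell relations, and natural isomorphisms are vertex gauges; $\operatorname{Sec}(\pi^{\mathrm{sk}})$ is the groupoid of these. $G$ acts on $K$ by cellular maps and on the Stokes data by pullback, writing $g(u)$ for the transported element. A $G$-equivariant Stokes cocycle on $K$ is a cocycle $(u_e)$ for $\pi^{\mathrm{sk}}$ together with elements $a_g(v)\in\mathrm{St}_\Phi(S(v))$ for every $g\in G$ and vertex $v$ such that $u_{g\cdot e}=a_g(w)\,g(u_e)\,a_g(v)^{-1}$ for every oriented $1$-cell $e:v\to w$ and $g\in G$, and $a_{gh}(v)=a_g(v)\,g(a_h(v))$ for all $g,h$ and vertices $v$; morphisms are vertex gauges $h(v)\in\mathrm{St}_\Phi(S(v))$ transforming $(u_e,a_g(v))$ into $(u'_e,a'_g(v))$ by the usual conjugation. For a finite group $G$ acting on a groupoid $\mathcal C$ by strict autoequivalences, $\mathcal C^{hG}$ is the groupoid of objects $x$ with isomorphisms $\varphi_g:g\cdot x\to x$ such that $\varphi_1=\mathrm{id}$, $\varphi_{gh}=\varphi_g\circ g(\varphi_h)$, with morphisms $f$ satisfying $f\varphi_g=\varphi'_g g(f)$. *)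

(* Defs.v *)
From mathcomp Require Import all_boot all_fingroup.

Unset Implicit Arguments.
Unset Strict Implicit.
Unset Printing Implicit Defensive.

Local Open Scope group_scope.

(* Abstract (possibly infinite) groups: the Stokes groups St_Phi(S).  *)
Record Grp := {
  gcar :> Type;
  gmul : gcar -> gcar -> gcar;
  gone : gcar;
  ginv : gcar -> gcar;
  gmulA : forall x y z, gmul x (gmul y z) = gmul (gmul x y) z;
  gmul1l : forall x, gmul gone x = x;
  gmul1r : forall x, gmul x gone = x;
  gmulVl : forall x, gmul (ginv x) x = gone;
  gmulVr : forall x, gmul x (ginv x) = gone }.

Arguments gmul {g}.
Arguments gone {g}.
Arguments ginv {g}.

Definition ghom {A B : Grp} (f : A -> B) : Prop :=
  forall x y, f (gmul x y) = gmul (f x) (f y).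

(* Combinatorial data: the 2-skeleton of the CW decomposition K of    *)
(* N°, adapted to Sigma_{D,Phi,n}, with the Stokes groups of the      *)
(* strata, the restriction (generization) maps between adjacent cells,*)
(* and a cellular action of the finite group gT together with the     *)
(* pullback action on Stokes data.                                    *)
(*  - V : vertices, E : 1-cells (each with a chosen orientation       *)
(*    src e -> tgt e), F : 2-cells, bnd f : boundary loop of f as a   *)
(*    word in oriented 1-cells ((e,false) = e, (e,true) = e reversed).*)
(*  - resVE v e / resEF e f : restriction of sections from (a         *)
(*    neighbourhood of) a face to the adjacent higher cell.          *)
(*  - actV/actE/actF : the cellular action; flipE g e records whether *)
(*    g reverses the chosen orientation of e.                        *)
Record StokesCW (gT : finGroupType) := {
  V : Type; E : Type; F : Type;
  src : E -> V; tgt : E -> V;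
  bnd : F -> seq (E * bool);
  Str : Type;
  SV : V -> Str; SE : E -> Str; SF : F -> Str;
  St : Str -> Grp;
  resVE : forall v e, St (SV v) -> St (SE e);
  resEF : forall e f, St (SE e) -> St (SF f);
  resVE_hom : forall v e, ghom (resVE v e);
  resEF_hom : forall e f, ghom (resEF e f);
  actV : gT -> V -> V; actE : gT -> E -> E; actF : gT -> F -> F;
  flipE : gT -> E -> bool;
  actV1 : forall v, actV 1 v = v;
  actVM : forall g h v, actV (g * h) v = actV g (actV h v);
  actE1 : forall e, actE 1 e = e;
  actEM : forall g h e, actE (g * h) e = actE g (actE h e);
  actF1 : forall f, actF 1 f = f;
  actFM : forall g h f, actF (g * h) f = actF g (actF h f);
  flipE1 : forall e, flipE 1 e = false;
  flipEM : forall g h e, flipE (g * h) e = flipE h e (+) flipE g (actE h e);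
  src_act : forall g e,
    src (actE g e) = if flipE g e then actV g (tgt e) else actV g (src e);
  tgt_act : forall g e,
    tgt (actE g e) = if flipE g e then actV g (src e) else actV g (tgt e);
  pullV : forall g v, St (SV (actV g v)) -> St (SV v);
  pullE : forall g e, St (SE (actE g e)) -> St (SE e);
  pullF : forall g f, St (SF (actF g f)) -> St (SF f);
  pullV_hom : forall g v, ghom (pullV g v);
  pullE_hom : forall g e, ghom (pullE g e);
  pullF_hom : forall g f, ghom (pullF g f);
  pullV1 : forall v (x : St (SV (actV 1 v))),
    pullV 1 v x = eq_rect _ (fun w => St (SV w)) x _ (actV1 v);
  pullE1 : forall e (x : St (SE (actE 1 e))),
    pullE 1 e x = eq_rect _ (fun w => St (SE w)) x _ (actE1 e);
  pullF1 : forall f (x : St (SF (actF 1 f))),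
    pullF 1 f x = eq_rect _ (fun w => St (SF w)) x _ (actF1 f);
  pullVM : forall g h v (x : St (SV (actV g (actV h v)))),
    pullV (g * h) v (eq_rect _ (fun w => St (SV w)) x _ (esym (actVM g h v)))
    = pullV h v (pullV g (actV h v) x);
  pullEM : forall g h e (x : St (SE (actE g (actE h e)))),
    pullE (g * h) e (eq_rect _ (fun w => St (SE w)) x _ (esym (actEM g h e)))
    = pullE h e (pullE g (actE h e) x);
  pullFM : forall g h f (x : St (SF (actF g (actF h f)))),
    pullF (g * h) f (eq_rect _ (fun w => St (SF w)) x _ (esym (actFM g h f)))
    = pullF h f (pullF g (actF h f) x);
  resVE_pull : forall g v e (x : St (SV (actV g v))),
    resVE v e (pullV g v x) = pullE g e (resVE (actV g v) (actE g e) x);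
  resEF_pull : forall g e f (x : St (SE (actE g e))),
    resEF e f (pullE g e x) = pullF g f (resEF (actE g e) (actF g f) x)
}.

Arguments V {gT}. Arguments E {gT}. Arguments F {gT}.
Arguments src {gT}. Arguments tgt {gT}. Arguments bnd {gT}.
Arguments SV {gT}. Arguments SE {gT}. Arguments SF {gT}. Arguments St {gT}.
Arguments resVE {gT}. Arguments resEF {gT}.
Arguments actV {gT}. Arguments actE {gT}. Arguments actF {gT}.
Arguments flipE {gT}. Arguments pullV {gT}. Arguments pullE {gT}.

Section Stokes.
Variables (gT : finGroupType) (K : StokesCW gT).

(* Labellings of oriented 1-cells (candidate strict sections of pi^sk) *)
Definition Labels := forall e : E K, St K (SE K e).
Definition Gauge := forall v : V K, St K (SV K v).

Definition face_lab (u : Labels) (f : F K) (eb : E K * bool) : St K (SF K f) :=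
  let y := resEF K eb.1 f (u eb.1) in if eb.2 then ginv y else y.

(* product of labels along a path e1 e2 ... ek (composition: uk ... u1) *)
Fixpoint path_prod (u : Labels) (f : F K) (s : seq (E K * bool))
  (acc : St K (SF K f)) : St K (SF K f) :=
  match s with
  | [::] => acc
  | eb :: s' => path_prod u f s' (gmul (face_lab u f eb) acc)
  end.

(* strict section of pi^sk = labelling satisfying the 2-cell relations *)
Definition cocycle (u : Labels) : Prop :=
  forall f : F K, path_prod u f (bnd K f) gone = gone.

Definition gauge_rel (u u' : Labels) (h : Gauge) : Prop :=
  forall e : E K,
    u' e = gmul (gmul (resVE K (tgt K e) e (h (tgt K e))) (u e))
                (ginv (resVE K (src K e) e (h (src K e)))).

Definition gactU (g : gT) (u : Labels) : Labels := fun e =>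
  let y := pullE K g^-1 e (u (actE K g^-1 e)) in
  if flipE K g^-1 e then ginv y else y.

Definition gactH (g : gT) (h : Gauge) : Gauge := fun v =>
  pullV K g^-1 v (h (actV K g^-1 v)).

Definition gcomp (h k : Gauge) : Gauge := fun v => gmul (h v) (k v).
Definition gid : Gauge := fun v => gone.

Record EqCocycle := {
  ec_u : Labels;
  ec_a : gT -> Gauge;
  ec_coc : cocycle ec_u;
  ec_rel : forall g (e : E K),
    ec_u e = gmul (gmul (resVE K (tgt K e) e (ec_a g (tgt K e))) (gactU g ec_u e))
                  (ginv (resVE K (src K e) e (ec_a g (src K e))));
  ec_mul : forall g h (v : V K),
    ec_a (g * h) v = gmul (ec_a g v) (gactH g (ec_a h) v) }.

Definition eqc_hom (c c' : EqCocycle) (h : Gauge) : Prop :=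
  gauge_rel (ec_u c) (ec_u c') h /\
  forall g (v : V K),
    ec_a c' g v = gmul (gmul (h v) (ec_a c g v)) (ginv (gactH g h v)).

End Stokes.

Arguments Labels {gT} K. Arguments Gauge {gT} K.
Arguments face_lab {gT K}. Arguments path_prod {gT K}.
Arguments cocycle {gT K}. Arguments gauge_rel {gT K}.
Arguments gactU {gT K}. Arguments gactH {gT K}.
Arguments gcomp {gT K}. Arguments gid {gT} K.
Arguments EqCocycle {gT} K. Arguments ec_u {gT K}. Arguments ec_a {gT K}.
Arguments eqc_hom {gT K}.

(* Concrete groupoids: objects, a type of morphism data, and the      *)
(* predicate "m is a morphism x -> y"; comp m n = m o n.              *)
Record CGrpd := {
  Ob : Type; Mor : Type;
  hom : Ob -> Ob -> Mor -> Prop;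
  comp : Mor -> Mor -> Mor;
  idm : Mor }.

Arguments hom {c}. Arguments comp {c}. Arguments idm {c}.

Record CGAct (gT : finGroupType) (C : CGrpd) := {
  actO : gT -> Ob C -> Ob C;
  actM : gT -> Mor C -> Mor C }.

Arguments actO {gT C}. Arguments actM {gT C}.


Section HomotopyFixedPoints.
Variables (gT : finGroupType) (C : CGrpd) (A : CGAct gT C).

Record hGOb := {
  hx : Ob C;
  hphi : gT -> Mor C;
  hphi_hom : forall g, hom (actO A g hx) hx (hphi g);
  hphi1 : hphi 1 = idm;
  hphiM : forall g h, hphi (g * h) = comp (hphi g) (actM A g (hphi h)) }.

Definition hG_hom (X Y : hGOb) (f : Mor C) : Prop :=
  hom (hx X) (hx Y) f /\
  forall g, comp f (hphi X g) = comp (hphi Y g) (actM A g f).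

Definition hG : CGrpd :=
  {| Ob := hGOb; Mor := Mor C; hom := hG_hom; comp := @comp C; idm := @idm C |}.

End HomotopyFixedPoints.

Arguments hGOb {gT C}. Arguments hx {gT C A}. Arguments hphi {gT C A}.
Arguments hG {gT C}.

Definition is_equivalence (C D : CGrpd) (FO : Ob C -> Ob D) (FM : Mor C -> Mor D)
  : Prop :=
  (forall x y m, hom x y m -> hom (FO x) (FO y) (FM m)) /\
  (forall x y z m n, hom x y n -> hom y z m -> FM (comp m n) = comp (FM m) (FM n)) /\
  (FM idm = idm) /\
  (forall x y m', hom (FO x) (FO y) m' ->
     exists m, (hom x y m /\ FM m = m') /\
               forall m2, hom x y m2 /\ FM m2 = m' -> m2 = m) /\
  (* essentially surjective (every morphism of a groupoid is invertible) *)
  (forall y, exists x m, hom (FO x) y m).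

Section Groupoids.
Variables (gT : finGroupType) (K : StokesCW gT).

Definition SecGrpd : CGrpd :=
  {| Ob := {u : Labels K | cocycle u}; Mor := Gauge K;
     hom := fun x y h => gauge_rel (sval x) (sval y) h;
     comp := @gcomp _ K; idm := gid K |}.

(* the induced G-action on Sec(pi^sk); Hact: transport preserves the *)
(* 2-cell relations (G acts cellularly)                               *)
Definition SecAct (Hact : forall g u, cocycle u -> cocycle (gactU g u))
  : CGAct gT SecGrpd :=
  {| actO := fun g (x : Ob SecGrpd) =>
       (exist _ (gactU g (sval x)) (Hact g _ (svalP x)) : Ob SecGrpd);
     actM := fun g (h : Mor SecGrpd) => (gactH g h : Mor SecGrpd) |}.

Definition EqCocGrpd : CGrpd :=
  {| Ob := EqCocycle K; Mor := Gauge K; hom := @eqc_hom _ K;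
     comp := @gcomp _ K; idm := gid K |}.

End Groupoids.

Arguments SecGrpd {gT} K. Arguments SecAct {gT K}. Arguments EqCocGrpd {gT} K.

(* Main.v *)
Require Import Defs.
From Stdlib Require Import FunctionalExtensionality.
From mathcomp Require Import all_boot all_fingroup.

Local Open Scope group_scope.

Section Aux.
Variable G : Grp.
Implicit Types x y z : G.

Lemma gcanl x y z : gmul x y = gmul x z -> y = z.
Proof.
move=> H; rewrite -(gmul1l _ y) -(gmul1l _ z) -(gmulVl _ x) -!gmulA H //.
Qed.

Lemma gidem x : x = gmul x x -> x = gone.
Proof. by move=> H; apply: (gcanl x); rewrite gmul1r -H. Qed.

Lemma gswap (f a a' b : G) : a' = gmul (gmul f a) (ginv b) <-> gmul f a = gmul a' b.
Proof.
split=> H.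
  by rewrite H -gmulA gmulVl gmul1r.
by rewrite H -gmulA gmulVr gmul1r.
Qed.
End Aux.

Lemma ghom1 (A B : Grp) (f : A -> B) : ghom f -> f gone = gone.
Proof. move=> H; apply: gidem; by rewrite -H gmul1l. Qed.

Section Main.
Variables (gT : finGroupType) (K : StokesCW gT).
Variable Hact : forall (g : gT) (u : Labels K), cocycle u -> cocycle (gactU g u).

Lemma eqrect_aux (h : Gauge K) w v (p : w = v) :
  eq_rect w (fun w => St K (SV K w)) (h w) v p = h v.
Proof. by case: _ / p. Qed.

Lemma gactH1 (h : Gauge K) v : gactH 1 h v = h v.
Proof.
rewrite /gactH invg1 pullV1; exact: eqrect_aux.
Qed.

Lemma gactH_gid g : gactH g (gid K) = gid K.
Proof.
apply: functional_extensionality_dep => v.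
rewrite /gactH /gid; apply: ghom1; exact: pullV_hom.
Qed.

Lemma ec_a1 (c : EqCocycle K) : ec_a c 1 = gid K.
Proof.
apply: functional_extensionality_dep => v.
have := ec_mul _ _ c 1 1 v; rewrite mulg1 gactH1 => H.
exact: gidem H.
Qed.

Lemma ec_aM (c : EqCocycle K) g h :
  ec_a c (g * h) = gcomp (ec_a c g) (gactH g (ec_a c h)).
Proof.
apply: functional_extensionality_dep => v; exact: ec_mul.
Qed.

Definition FO_of (c : EqCocycle K) : hGOb (SecAct Hact) :=
  @Build_hGOb gT (SecGrpd K) (SecAct Hact)
    (exist _ (ec_u c) (ec_coc _ _ c)) (ec_a c)
    (fun g e => ec_rel _ _ c g e) (ec_a1 c) (ec_aM c).

Lemma hom_equiv (c c' : EqCocycle K) (f : Gauge K) :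
  eqc_hom c c' f <-> @hG_hom _ _ (SecAct Hact) (FO_of c) (FO_of c') f.
Proof.
split=> [[H1 H2]|[H1 H2]]; split => //.
- move=> g; apply: functional_extensionality_dep => v.
  rewrite /gcomp /=; apply/gswap; exact: H2.
- move=> g v; apply/gswap.
  have := H2 g; rewrite /= /gcomp => E.
  exact: (f_equal (fun k => k v) E).
Qed.

Lemma resVE1 v e : resVE K v e gone = gone.
Proof. apply: ghom1; exact: resVE_hom. Qed.

Lemma ess_surj (Y : hGOb (SecAct Hact)) :
  exists x m, @hG_hom _ _ (SecAct Hact) (FO_of x) Y m.
Proof.
have rel : forall g (e : E K),
    sval (hx Y) e = gmul (gmul (resVE K (tgt K e) e (hphi Y g (tgt K e)))
                       (gactU g (sval (hx Y)) e))
                  (ginv (resVE K (src K e) e (hphi Y g (src K e)))).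
  move=> g e; exact: (hphi_hom _ _ _ Y g e).
have mul : forall g h v,
    hphi Y (g * h) v = gmul (hphi Y g v) (gactH g (hphi Y h) v).
  move=> g h v; rewrite (hphiM _ _ _ Y g h) //.
exists (Build_EqCocycle gT K (sval (hx Y)) (hphi Y) (svalP (hx Y)) rel mul).
exists (gid K); split.
- move=> e /=; rewrite /gid !resVE1 gmul1l.
  have -> : ginv (gone : St K (SE K e)) = gone.
    by rewrite -(gmul1l _ (ginv _)) gmulVr.
  by rewrite gmul1r.
- move=> g /=; rewrite gactH_gid; apply: functional_extensionality_dep => v.
  by rewrite /gcomp /gid gmul1l gmul1r.
Qed.

End Main.

Theorem proposition9p8 (gT : finGroupType) (K : StokesCW gT)
  (Hact : forall (g : gT) (u : Labels K), cocycle u -> cocycle (gactU g u)) :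
  exists FO : Ob (EqCocGrpd K) -> Ob (hG (SecAct Hact)),
    @is_equivalence (EqCocGrpd K) (hG (SecAct Hact))
      FO (fun h : Mor (EqCocGrpd K) => (h : Mor (hG (SecAct Hact)))) /\
    (forall c : Ob (EqCocGrpd K), sval (hx (FO c)) = ec_u c).
Proof.
exists (@FO_of _ _ Hact); split => //.
split; [|split; [|split; [|split]]] => //.
- move=> x y m H; exact/hom_equiv.
- move=> x y m' H; exists m'; split.
    by split => //; apply/hom_equiv.
  by move=> m2 [_ ->].
- move=> y; exact: ess_surj.
Qed.
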